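(* Let $g\colon\mathbb{R}^d\to\mathbb{R}$ be differentiable with $L_1$-Lipschitz gradient, and let $G$ be an $(a,b)$-inexact gradient oracle for $g$ with $0\le a\le1/20$, $b\ge0$. Let $0<\eta\le\min\{1,1/L_1\}$, $y_0\in\mathbb{R}^d$, and $y_{t+1}=y_t-\eta G(y_t)$. Then for all integers $0\le\tau\le t$, $$\|y_\tau-y_0\|^2\le16\eta t\frac{(1+a)^2}{1-a}\Big(g(y_0)-g(y_t)+(5+\eta)tb^2\Big).$$
   Context: A map $G\colon\mathbb{R}^d\to\mathbb{R}^d$ is an $(a,b)$-inexact gradient oracle for $g$ if $\|\nabla g(x)-G(x)\|\le a\|\nabla g(x)\|+b$ for all $x\in\mathbb{R}^d$. *)

(* Defs.v *)
(* R^d is rendered as row vectors 'rV[R]_d. *)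
From HB Require Import structures.
From mathcomp Require Import all_boot all_order all_algebra.
From mathcomp Require Import all_classical all_reals all_analysis.
Set Implicit Arguments. Unset Strict Implicit. Unset Printing Implicit Defensive.
Import Order.TTheory GRing.Theory Num.Theory.
Import numFieldNormedType.Exports.
Local Open Scope ring_scope.

Definition dotv {R : realType} {d : nat} (u v : 'rV[R]_d) : R :=
  \sum_(i < d) u 0 i * v 0 i.

Definition enorm {R : realType} {d : nat} (u : 'rV[R]_d) : R :=
  Num.sqrt (dotv u u).

Definition is_gradient {R : realType} {d : nat}
  (g : 'rV[R]_d -> R) (gradg : 'rV[R]_d -> 'rV[R]_d) : Prop :=
  forall x, differentiable g x /\ forall h, 'd g x h = dotv (gradg x) h.

Definition inexact_oracle {R : realType} {d : nat}
  (gradg G : 'rV[R]_d -> 'rV[R]_d) (a b : R) : Prop :=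
  forall x, enorm (gradg x - G x) <= a * enorm (gradg x) + b.

(* Main.v *)
Require Import Defs.
From HB Require Import structures.
From mathcomp Require Import all_boot all_order all_algebra.
From mathcomp Require Import all_classical all_reals all_analysis.
From mathcomp Require Import lra ring.
Import Order.TTheory GRing.Theory Num.Theory.
Import numFieldNormedType.Exports.
Local Open Scope ring_scope.
Set Implicit Arguments.
Section S.
Context {R : realType} {d : nat}.
Implicit Types u v w : 'rV[R]_d.

Lemma dotvC u v : dotv u v = dotv v u.
Proof. by apply: eq_bigr => i _; rewrite mulrC. Qed.
Lemma dotvDl u v w : dotv (u + v) w = dotv u w + dotv v w.
Proof. by rewrite /dotv -big_split; apply: eq_bigr => i _; rewrite !mxE mulrDl. Qed.
Lemma dotvZl k u w : dotv (k *: u) w = k * dotv u w.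
Proof. by rewrite /dotv mulr_sumr; apply: eq_bigr => i _; rewrite !mxE mulrA. Qed.
Lemma dotvNl u w : dotv (- u) w = - dotv u w.
Proof. by rewrite -scaleN1r dotvZl mulN1r. Qed.
Lemma dotvBl u v w : dotv (u - v) w = dotv u w - dotv v w.
Proof. by rewrite dotvDl dotvNl. Qed.
Lemma dotvDr u v w : dotv w (u + v) = dotv w u + dotv w v.
Proof. by rewrite dotvC dotvDl !(dotvC w). Qed.
Lemma dotvZr k u w : dotv w (k *: u) = k * dotv w u.
Proof. by rewrite dotvC dotvZl dotvC. Qed.
Lemma dotvBr u v w : dotv w (u - v) = dotv w u - dotv w v.
Proof. by rewrite !(dotvC w) dotvBl. Qed.
Lemma dotv_ge0 u : 0 <= dotv u u.
Proof. by apply: sumr_ge0 => i _; rewrite -expr2 sqr_ge0. Qed.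
Lemma enorm_ge0 u : 0 <= enorm u.
Proof. exact: sqrtr_ge0. Qed.
Lemma enorm_sq u : enorm u ^+ 2 = dotv u u.
Proof. by rewrite sqr_sqrtr // dotv_ge0. Qed.

Lemma dotv_eq0 u : dotv u u = 0 -> u = 0.
Proof.
move=> /eqP; rewrite psumr_eq0 => [/allP H|i _]; last by rewrite -expr2 sqr_ge0.
apply/matrixP => i j; rewrite mxE (ord1 i).
have := H j (mem_index_enum j); rewrite -expr2 sqrf_eq0 => /eqP ->//.
Qed.

Lemma CS2 u v : dotv u v ^+ 2 <= dotv u u * dotv v v.
Proof.
have [A0|Apos] := eqVneq (dotv u u) 0.
  have -> : dotv u v = 0 by rewrite (dotv_eq0 A0) /dotv big1 // => i _; rewrite mxE mul0r.
  by rewrite expr0n /= mulr_ge0 ?dotv_ge0.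
have := dotv_ge0 (dotv u u *: v - dotv u v *: u).
rewrite !dotvBl !dotvBr !dotvZl !dotvZr (dotvC v u).
have Ag : 0 < dotv u u by rewrite lt_neqAle eq_sym Apos dotv_ge0.
set A := dotv u u; set B := dotv u v; set C := dotv v v => H.
have : 0 <= A * (A * C - B ^+ 2) by nra.
rewrite pmulr_rge0 //; lra.
Qed.

Lemma CS u v : dotv u v <= enorm u * enorm v.
Proof.
rewrite /enorm -sqrtrM ?dotv_ge0 //.
apply: le_trans (ler_norm _) _.
by rewrite -sqrtr_sqr ler_sqrt ?CS2 // mulr_ge0 ?dotv_ge0.
Qed.

Lemma enormD u v : enorm (u + v) <= enorm u + enorm v.
Proof.
have h1 := CS u v; have h2 := enorm_ge0 u; have h3 := enorm_ge0 v.
have h4 := enorm_ge0 (u+v).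
have : enorm (u + v) ^+ 2 <= (enorm u + enorm v) ^+ 2.
  rewrite enorm_sq dotvDl !dotvDr (dotvC v u) -!enorm_sq; nra.
nra.
Qed.

Lemma enormZ k u : 0 <= k -> enorm (k *: u) = k * enorm u.
Proof.
move=> k0; rewrite /enorm dotvZl dotvZr mulrA sqrtrM ?mulr_ge0 //.
by rewrite -expr2 sqrtr_sqr ger0_norm.
Qed.

Lemma enormN u : enorm (- u) = enorm u.
Proof. by rewrite /enorm dotvNl dotvC dotvNl opprK. Qed.
End S.
Unset Implicit Arguments.

Lemma phi_deriv (R : realType) (d : nat) (g : 'rV[R]_d -> R) (gradg : 'rV[R]_d -> 'rV[R]_d) (x h : 'rV[R]_d) (s : R) :
  is_gradient g gradg ->
  is_derive s 1 (fun s : R => g (s *: h + x)) (dotv (gradg (s *: h + x)) h).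
Proof.
move=> gr.
pose f : R -> 'rV[R]_d := fun s : R => s *: h + x.
have dsc : differentiable (fun s : R => s *: h) s.
  exact: (@ex_diff _ _ _ _ _ _ _ (is_diff_scalel s h)).
have dct : differentiable (fun _ : R => x) s by exact: differentiable_cst.
have df : differentiable f s by apply: differentiableD.
have dfv : 'd f s 1 = h.
  have -> : f = (fun s : R => s *: h) + (fun _ => x) by [].
  rewrite (diffD dsc dct) /=.
  have E1 : 'd ( *:%R^~ h) s 1 = 1 *: h.
    by have := congr1 (fun F => F 1) (@diff_val _ _ _ _ _ _ _ (is_diff_scalel s h)).
  have E2 : 'd (cst x) s (1 : R) = 0 :> 'rV[R]_d.
    by have := congr1 (fun F => F (1 : R)) (@diff_cst _ _ _ x s).
  rewrite [X in X + _ = _]E1 [X in _ + X = _]E2.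
  by rewrite scale1r addr0.
have [dg dgv] := gr (f s).
have dc : differentiable (g \o f) s by apply: differentiable_comp.
apply: DeriveDef; first by apply: diff_derivable.
rewrite (_ : (fun s : R => g (s *: h + x)) = g \o f) //.
by rewrite deriveE // diff_comp //= dfv dgv.
Qed.

Lemma descent (R : realType) (d : nat) (g : 'rV[R]_d -> R)
  (gradg : 'rV[R]_d -> 'rV[R]_d) (L : R) (x h : 'rV[R]_d) :
  is_gradient g gradg -> 0 <= L ->
  (forall x z, enorm (gradg x - gradg z) <= L * enorm (x - z)) ->
  g (h + x) <= g x + dotv (gradg x) h + L / 2 * dotv h h.
Proof.
move=> gr L0 lip.
set c1 := dotv (gradg x) h; set C := dotv h h.
pose phi := fun s : R => g (s *: h + x).
pose psi := phi - c1 \*: (@id R) - (L/2*C) \*: ((@id R) * (@id R)).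
pose dpsi := fun s : R => dotv (gradg (s *: h + x)) h - c1 *: 1 - (L/2*C) *: (s *: 1 + s *: 1).
have D (s : R) : is_derive s 1 psi (dpsi s).
  have P := @phi_deriv R d g gradg x h s gr.
  have I1 : is_derive s 1 (@id R) 1 by exact: is_derive_id.
  have I2 := is_deriveM I1 I1.
  exact: (is_deriveB (is_deriveB P (is_deriveZ c1 I1)) (is_deriveZ (L/2*C) I2)).
have [c cin E] : exists2 c, c \in `]0, 1[%R & psi 1 - psi 0 = dpsi c * (1 - 0).
  apply: (@MVT R psi dpsi 0 1); first exact: ltr01.
  apply: derivable_within_continuous => s sin; exact: (@ex_derive _ _ _ _ _ _ _ (D s)).
have c0 : 0 <= c by move: cin; rewrite in_itv /= => /andP[/ltW].
have E0 : psi 0 = g x.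
  have -> : psi 0 = g (0 *: h + x) - c1 * 0 - L / 2 * C * (0 * 0) by [].
  by rewrite scale0r add0r !mulr0 !subr0.
have E1 : psi 1 = g (h + x) - c1 - L / 2 * C.
  have -> : psi 1 = g (1 *: h + x) - c1 * 1 - L / 2 * C * (1 * 1) by [].
  by rewrite scale1r !mulr1.
have Hd : dotv (gradg (c *: h + x)) h - c1 <= L * c * C.
  rewrite /c1 -dotvBl.
  apply: (le_trans (CS _ _)).
  have := lip (c *: h + x) x; rewrite addrK enormZ // => H.
  have e0 := enorm_ge0 h.
  have : enorm (gradg (c *: h + x) - gradg x) * enorm h <= L * (c * enorm h) * enorm h.
    by apply: ler_wpM2r.
  have -> : L * c * C = L * (c * enorm h) * enorm h.
    by rewrite /C -enorm_sq expr2 !mulrA.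
  by [].
have Edp : dpsi c = dotv (gradg (c *: h + x)) h - c1 * 1 - (L / 2 * C) * (c * 1 + c * 1) by [].
move: E; rewrite E0 E1 Edp subr0 !mulr1.
lra.
Qed.

Lemma scalar_step (R : realType) (a b x e gn : R) :
  0 <= a -> a <= 1 / 20 -> 0 <= b -> 0 <= x -> 0 <= e ->
  e <= a * gn + b -> gn <= e + x -> e * x <= x ^+ 2 / 3 + 2 * b ^+ 2.
Proof.
move=> a0 a1 b0 x0 e0 H1 H2.
have H3 : e * (1 - a) <= a * x + b by nra.
have H4 : 19 * e <= x + 20 * b by nra.
have H5 : 19 * (e * x) <= x ^+ 2 + 20 * b * x by nra.
have H6 : 0 <= 5 * (x - 2 * b) ^+ 2 by rewrite mulr_ge0 // sqr_ge0.
nra.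
Qed.

Theorem mainTheorem3 (R : realType) (d : nat)
  (g : 'rV[R]_d -> R) (gradg G : 'rV[R]_d -> 'rV[R]_d)
  (L1 a b eta : R) (y : nat -> 'rV[R]_d) :
  is_gradient g gradg ->
  0 <= L1 ->
  (forall x z, enorm (gradg x - gradg z) <= L1 * enorm (x - z)) ->
  0 <= a -> a <= 1 / 20 -> 0 <= b ->
  inexact_oracle gradg G a b ->
  0 < eta -> eta <= 1 -> eta * L1 <= 1 ->
  (forall t, y t.+1 = y t - eta *: G (y t)) ->
  forall t tau : nat, (tau <= t)%N ->
    enorm (y tau - y 0%N) ^+ 2 <=
      16 * eta * t%:R * ((1 + a) ^+ 2 / (1 - a)) *
      (g (y 0%N) - g (y t) + (5 + eta) * t%:R * b ^+ 2).
Proof.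
move=> gr L0 lip a0 a1 b0 orc eta0 eta1 etaL yrec.
pose x s := enorm (G (y s)).
pose S n := \sum_(s < n) x s ^+ 2.
have step s : g (y s.+1) <= g (y s) - eta / 6 * x s ^+ 2 + 2 * eta * b ^+ 2.
  have Dsc := @descent R d g gradg L1 (y s) (- (eta *: G (y s))) gr L0 lip.
  rewrite addrC -yrec in Dsc.
  have hx := enorm_ge0 (G (y s)).
  have he := enorm_ge0 (gradg (y s) - G (y s)).
  have hg := enorm_ge0 (gradg (y s)).
  have o := orc (y s).
  have tri : enorm (gradg (y s)) <= enorm (gradg (y s) - G (y s)) + x s.
    by have := enormD (gradg (y s) - G (y s)) (G (y s)); rewrite subrK.
  have sc := @scalar_step R _ _ _ _ _ a0 a1 b0 hx he o tri.
  have cs : dotv (G (y s) - gradg (y s)) (G (y s)) <= enorm (gradg (y s) - G (y s)) * x s.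
    by rewrite -opprB -(enormN (gradg (y s) - G (y s))); apply: CS.
  have e1 : dotv (gradg (y s)) (- (eta *: G (y s))) =
      - eta * (x s ^+ 2 - dotv (G (y s) - gradg (y s)) (G (y s))).
    rewrite -scaleNr dotvZr dotvBl /x enorm_sq; ring.
  have e2 : dotv (- (eta *: G (y s))) (- (eta *: G (y s))) = eta ^+ 2 * x s ^+ 2.
    by rewrite -scaleNr dotvZl dotvZr /x enorm_sq; ring.
  rewrite e1 e2 in Dsc.
  have q : L1 / 2 * (eta ^+ 2 * x s ^+ 2) <= eta / 2 * x s ^+ 2.
    have : 0 <= eta * x s ^+ 2 * (1 - eta * L1) by rewrite !mulr_ge0 ?sqr_ge0 ?subr_ge0 // ltW.
    lra.
  set ee := enorm (gradg (y s) - G (y s)) in sc cs.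
  set dd := dotv (G (y s) - gradg (y s)) (G (y s)) in Dsc cs.
  have : eta * dd <= eta * (ee * x s) by rewrite ler_pM2l.
  have : eta * (ee * x s) <= eta * (x s ^+ 2 / 3 + 2 * b ^+ 2) by rewrite ler_pM2l.
  lra.
have xge s : 0 <= x s by exact: enorm_ge0.
have Sge n : 0 <= S n by apply: sumr_ge0 => i _; exact: sqr_ge0.
have sumb n : eta / 6 * S n <= g (y 0%N) - g (y n) + 2 * eta * n%:R * b ^+ 2.
  elim: n => [|n IH].
    by rewrite /S big_ord0 mulr0n !mulr0 subrr !mul0r addr0.
  rewrite /S big_ord_recr /= -/(S n) -[n.+1%:R]natr1.
  have := step n; nra.
have dist k : enorm (y k - y 0%N) ^+ 2 <= k%:R * eta ^+ 2 * S k.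
  elim: k => [|k IH].
    rewrite subrr enorm_sq -(scale0r (0 : 'rV[R]_d)) dotvZl !mul0r.
    by [].
  have tri : enorm (y k.+1 - y 0%N) <= enorm (y k - y 0%N) + eta * x k.
    have -> : y k.+1 - y 0%N = (y k - y 0%N) + - (eta *: G (y k)).
      by rewrite yrec addrAC.
    apply: (le_trans (enormD _ _)).
    by rewrite enormN (enormZ _ _ (ltW eta0)).
  rewrite /S big_ord_recr /= -/(S k) -[k.+1%:R]natr1.
  set D := enorm (y k - y 0%N) in IH tri.
  set D' := enorm (y k.+1 - y 0%N) in tri *.
  have hD : 0 <= D by exact: enorm_ge0.
  have hD' : 0 <= D' by exact: enorm_ge0.
  set K := k%:R in IH *.
  have K0 : 0 <= K by rewrite /K ler0n.
  set P := eta ^+ 2 * S k in IH.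
  have P0 : 0 <= P by rewrite /P mulr_ge0 ?sqr_ge0.
  have -> : (K + 1) * eta ^+ 2 * (S k + x k ^+ 2) = K * P + P + K * (eta * x k) ^+ 2 + (eta * x k) ^+ 2.
    rewrite /P; ring.
  have IH' : D ^+ 2 <= K * P by rewrite /P mulrA.
  set Q := eta * x k in tri *.
  have Q0 : 0 <= Q := mulr_ge0 (ltW eta0) (xge k).
  have key : 2 * D * Q <= P + K * Q ^+ 2.
    have [Kz|Kp] := eqVneq K 0.
      rewrite Kz mul0r in IH'.
      have : D = 0 by nra.
      move=> ->; rewrite Kz; nra.
    have Kpos : 0 < K by rewrite lt_neqAle eq_sym Kp K0.
    have h1 : 0 <= (K * Q - D) ^+ 2 by exact: sqr_ge0.
    have h2 : K * (2 * D * Q) <= K * (P + K * Q ^+ 2) by nra.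
    by rewrite ler_pM2l in h2.
  have : D' ^+ 2 <= (D + Q) ^+ 2 by rewrite ler_sqr ?nnegrE ?addr_ge0.
  nra.
have Sle n m : (n <= m)%N -> S n <= S m.
  elim: m => [|m IH] nm.
    by move: nm; rewrite leqn0 => /eqP ->.
  move: nm; rewrite leq_eqVlt => /orP[/eqP -> // | nm].
  rewrite ltnS in nm.
  apply: (le_trans (IH nm)).
  by rewrite /S big_ord_recr /= lerDl sqr_ge0.
move=> t tau le.
set T := t%:R.
have T0 : 0 <= T by rewrite /T ler0n.
have h0 : enorm (y tau - y 0%N) ^+ 2 <= T * eta ^+ 2 * S t.
  apply: (le_trans (dist tau)).
  have tT : tau%:R <= T :> R by rewrite /T ler_nat.
  apply: ler_pM; [| exact: Sge | | exact: Sle].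
  - by rewrite mulr_ge0 ?ler0n ?sqr_ge0.
  - by apply: ler_pM; rewrite ?ler0n ?sqr_ge0.
set Q := g (y 0%N) - g (y t) + 2 * eta * T * b ^+ 2.
set Q' := g (y 0%N) - g (y t) + (5 + eta) * T * b ^+ 2.
have h1 : eta / 6 * S t <= Q := sumb t.
have h3 : 0 <= Q.
  apply: le_trans h1; apply: mulr_ge0 => //; apply: divr_ge0 => //; exact: ltW.
have h2 : Q <= Q'.
  rewrite /Q /Q' lerD2l.
  have : 0 <= T * b ^+ 2 by rewrite mulr_ge0 ?sqr_ge0.
  nra.
set F := (1 + a) ^+ 2 / (1 - a).
have F1 : 1 <= F.
  rewrite /F ler_pdivlMr; last by lra.
  rewrite mul1r; nra.
have e : 0 <= eta by exact: ltW.
have s1 : T * eta ^+ 2 * S t <= 6 * eta * T * Q.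
  have : eta * T * (eta / 6 * S t) <= eta * T * Q by apply: ler_wpM2l => //; exact: mulr_ge0.
  have -> : T * eta ^+ 2 * S t = 6 * (eta * T * (eta / 6 * S t)) by field.
  nra.
have s2 : 6 * eta * T * Q <= 16 * eta * T * Q'.
  have : 0 <= eta * T by exact: mulr_ge0.
  nra.
have s3 : 16 * eta * T * Q' <= 16 * eta * T * F * Q'.
  have : 0 <= eta * T * Q' by rewrite !mulr_ge0 // (le_trans h3 h2).
  nra.
lra.
Qed.
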